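(* Suppose a strategy is relative growth optimal for investor $m$, and consider any feasible strategy profile and initial wealth $y_0\in\mathbb{R}^M_{++}$ in which investor $m$ uses it, with wealth process $Y$. Then investor $m$ survives in the sense that $\inf_{t\ge0}r^m_t>0$ a.s., and for every investor $k$, $$\limsup_{t\to\infty}\frac1t\ln Y^m_t\ \ge\ \limsup_{t\to\infty}\frac1t\ln Y^k_t\quad\text{a.s.}$$
   Context: Setting: $(\Omega,\mathcal{F},\mathbb{F}=(\mathcal{F}_t)_{t\ge0},\mathbb{P})$ filtered probability space with usual conditions, $\mathcal{P}$ predictable $\sigma$-algebra. $|x|=\sum_n|x^n|$; for $x\in\mathbb{R}^{MN}$, $x^m=(x^{m,n})_n$, $x^{\cdot,n}=(x^{m,n})_m$. $M\ge2$ investors, $N\ge1$ assets. Payoff process $X$: adapted, nondecreasing, càdlàg, $\mathbb{R}^N_+$-valued, $X_0=0$; $X^c_t=X_t-\sum_{0<s\le t}\Delta X_s$; $\nu$ the compensator of its jump measure; $G_t=|X^c_t|+(|x|\wedge1)*\nu_t$. Strategies: $D$ = càdlàg $y\colon\mathbb{R}_+\to\mathbb{R}^M_+$, $\mathcal{D}_t=\sigma(y_u,u\le t)$, $E=\Omega\times D$, $\mathcal{E}_t=\mathcal{F}_t\otimes\mathcal{D}_t$, $\mathcal{P}^E$ the $\sigma$-algebra on $E\times\mathbb{R}_+$ generated by measurable functions left-continuous in $t$ and $\mathcal{E}_t$-measurable for fixed $t$. A strategy is a $\mathcal{P}^E$-measurable $\boldsymbol{L}_t(\omega,y)\in\mathbb{R}^N_+$,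 $\boldsymbol{L}_0=0$, nondecreasing càdlàg in $t$. Feasibility: for predictable nondecreasing càdlàg $H$ with $G\ll H$, $dL/dH$ is a predictable version of the Lebesgue derivative of the measure $\mathbb{P}\otimes L(A)=\mathbb{E}\int\mathbb{1}_A\,dL$ w.r.t. $\mathbb{P}\otimes H$ on $\mathcal{P}$. A profile $(\boldsymbol{L}^1,\dots,\boldsymbol{L}^M)$ and $y_0\in\mathbb{R}^M_{++}$ are feasible if there is a unique (up to indistinguishability) nonnegative càdlàg adapted $\mathbb{R}^M_+$-valued process $Y$ such that (1) for each $m$, a.s. for all $t$, $Y^m_t=y^m_0-|L^m_t|+\sum_n\int_0^t\frac{l^{m,n}_s}{|l^{\cdot,n}_s|}dX^n_s$ with $L^m_t(\omega)=\boldsymbol{L}^m_t(\omega,Y(\omega))$, $l^{m,n}=dL^{m,n}/dH$, $0/0=0$; (2) if $Y^m_t(\omega)=0$ or $Y^m_{t-}(\omega)=0$, then $L^m_s(\omega)=L^m_{t-}(\omega)$ and $Y^m_s(\omega)=0$ for all $s\ge t$. Relative wealth: $r^m_t=Y^m_t/|Y_t|$ ($:=0$ if $|Y_t|=0$). A strategy is relative growth optimal for investor $m$ if for any feasible initial wealth and strategy profile in which investor $m$ uses it, $Y^m_t>0$ for all $t\ge0$ and $\ln r^m$ is a submartingale. In the growth-rate inequality, $\ln 0:=-\infty$. *)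

(* Defs.v *)
From HB Require Import structures.
From mathcomp Require Import all_boot all_order all_algebra.
From mathcomp Require Import all_classical all_reals all_analysis measurable_realfun.
Set Implicit Arguments. Unset Strict Implicit. Unset Printing Implicit Defensive.
Import Order.TTheory GRing.Theory Num.Def Num.Theory.
Import numFieldTopology.Exports.
Local Open Scope classical_set_scope.
Local Open Scope ring_scope.

Section Paths.
Context {R : realType}.

Definition mkcumul (f : R -> R) : cumulative R R :=
  match pselect ({homo f : x y / x <= y} /\ right_continuous f) with
  | left h => HB.pack f (isCumulative.Build R _ R f (proj1 h) (proj2 h))
  | right _ => [the cumulative R R of (@idfun R)]
  end.

Definition pathmu (f : R -> R) := lebesgue_stieltjes_measure (mkcumul (fun t => f (Num.max t 0))).

Definition cadlag (f : R -> R) :=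
  (forall t, 0 <= t -> f @ at_right t --> f t) /\
  (forall t, 0 < t -> cvg (f @ at_left t)).

Definition leftlim (f : R -> R) (t : R) : R :=
  if 0 < t then lim (f @ at_left t) else f 0.

Definition Rp : set R := `[0, +oo[%classic.
Definition Ioc0 (t : R) : set R := `]0, t]%classic.
Definition lnE (x : R) : \bar R := if 0 < x then (ln x)%:E else -oo%E.

Lemma cadlag_cst (c : R) : cadlag (fun _ : R => c).
Proof. by split=> t _; [exact: cvg_cst | apply/cvg_ex; exists c; exact: cvg_cst]. Qed.
Definition limsup_at_infty (g : R -> \bar R) : \bar R :=
  limf_esup g (pinfty_nbhs R).
End Paths.

Section Market.
Context {R : realType} {d : measure_display} {Omega : measurableType d}.
Variable P : probability Omega R.
Variable F : R -> set (set Omega).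
(** M investors, N assets *)
Variables M N : nat.

Definition usual_filtration : Prop :=
  [/\ (forall t, 0 <= t -> sigma_algebra setT (F t)),
      (forall t, 0 <= t -> F t `<=` measurable),
      (forall s t, 0 <= s -> s <= t -> F s `<=` F t),
      (forall A, P.-negligible A -> F 0 A) &
      (forall t, 0 <= t -> F t = \bigcap_(s in `]t, +oo[) F s)].

Definition adapted (Z : Omega -> R -> R) : Prop :=
  forall t, 0 <= t -> forall B : set R, measurable B ->
    F t [set w | B (Z w t)].

Definition OmR : set (Omega * R) := [set z | 0 <= z.2].

Definition predictable_gen : set (set (Omega * R)) :=
  [set A | exists (Z : Omega -> R -> R) (B : set R),
     [/\ adapted Z, (forall w t, 0 < t -> Z w @ at_left t --> Z w t),
         measurable B & A = OmR `&` [set z | B (Z z.1 z.2)]]].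

Definition Pred : set (set (Omega * R)) := <<s OmR, predictable_gen >>.

Definition predictable (Z : Omega -> R -> R) : Prop :=
  forall B : set R, measurable B -> Pred (OmR `&` [set z | B (Z z.1 z.2)]).

Definition PL (L : Omega -> R -> R) (A : set (Omega * R)) : \bar R :=
  (\int[P]_w \int[pathmu (L w)]_(t in Rp) (\1_A (w, t))%:E)%E.

Definition PLw (L : Omega -> R -> R) (A : set (Omega * R))
    (l : Omega -> R -> R) : \bar R :=
  (\int[P]_w \int[pathmu (L w)]_(t in Rp) (\1_A (w, t) * l w t)%:E)%E.

Definition pdominated (G H : Omega -> R -> R) : Prop :=
  forall A, Pred A -> PL H A = 0%E -> PL G A = 0%E.

(** l is a predictable version of the Lebesgue derivative dL/dH of P (x) L
    w.r.t. P (x) H on the predictable sigma-algebra (Lebesgue decomposition: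
    P (x) L (A) = int_A l d(P (x) H) + (singular part carried by S)) *)
Definition is_dLdH (L H l : Omega -> R -> R) : Prop :=
  [/\ (forall w t, 0 <= l w t), predictable l &
      exists S, [/\ Pred S, PL H S = 0%E &
        forall A, Pred A -> PL L (A `\` S) = PLw H A l]].

Definition ndcadlag (f : R -> R) : Prop :=
  {in Rp &, {homo f : x y / x <= y}} /\ cadlag f.

Definition payoff (X : Omega -> R -> 'I_N -> R) : Prop :=
  forall n, [/\ adapted (fun w t => X w t n),
     (forall w, X w 0 n = 0), (forall w t, 0 <= t -> 0 <= X w t n) &
     (forall w, ndcadlag (fun t => X w t n))].

Definition jump (f : R -> R) (s : R) : R := f s - leftlim f s.

Definition contpart (f : R -> R) (t : R) : R :=
  f t - fine (\esum_(s in Ioc0 t) (jump f s)%:E)%E.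

(** (|x| /\ 1) * mu_t = sum_{0<s<=t} (|Delta X_s| /\ 1) *)
Definition jumpsum (X : Omega -> R -> 'I_N -> R) (w : Omega) (t : R) : R :=
  fine (\esum_(s in Ioc0 t)
          (Num.min (\sum_n `|jump (fun u => X w u n) s|) 1)%:E)%E.

(** B = (|x| /\ 1) * nu: the compensator (dual predictable projection) of
    the increasing process A *)
Definition compensator (A B : Omega -> R -> R) : Prop :=
  [/\ predictable B, (forall w, B w 0 = 0), (forall w, ndcadlag (B w)) &
      forall W : Omega -> R -> R, predictable W -> (forall w t, 0 <= W w t) ->
        PLw A setT W = PLw B setT W].

(** G_t = |X^c_t| + (|x| /\ 1) * nu_t *)
Definition Gproc (X : Omega -> R -> 'I_N -> R) (B : Omega -> R -> R)
    (w : Omega) (t : R) : R :=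
  \sum_n contpart (fun u => X w u n) t + B w t.

Definition Dprop (y : R -> 'I_M -> R) : Prop :=
  (forall t i, 0 <= t -> 0 <= y t i) /\ (forall i, cadlag (fun t => y t i)).

Definition Dpath := {y : R -> 'I_M -> R | Dprop y}.

Lemma Dprop0 : Dprop (fun _ _ => 0).
Proof. by split=> [t i _|i]; [exact: lexx | exact: cadlag_cst]. Qed.

Definition toD (y : R -> 'I_M -> R) : Dpath :=
  match pselect (Dprop y) with
  | left h => exist _ y h
  | right _ => exist _ (fun _ _ => 0) Dprop0
  end.

Definition Dsig (t : R) : set (set Dpath) :=
  <<s [set C | exists u (i : 'I_M) (B : set R),
          [/\ 0 <= u, u <= t, measurable B &
              C = [set y : Dpath | B (proj1_sig y u i)]]] >>.

Definition Esig (t : R) : set (set (Omega * Dpath)) :=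
  <<s [set C | exists A D, [/\ F t A, Dsig t D & C = A `*` D]] >>.

Definition ER : set ((Omega * Dpath) * R) := [set z | 0 <= z.2].

Definition PE : set (set ((Omega * Dpath) * R)) :=
  <<s ER, [set C | exists (Z : Omega -> Dpath -> R -> R) (B : set R),
     [/\ (forall w y t, 0 < t -> Z w y @ at_left t --> Z w y t),
         (forall t, 0 <= t -> forall B', measurable B' ->
             Esig t [set e | B' (Z e.1 e.2 t)]),
         measurable B &
         C = ER `&` [set z | B (Z z.1.1 z.1.2 z.2)]]] >>.

Definition strategy (L : Omega -> Dpath -> R -> 'I_N -> R) : Prop :=
  forall n,
  [/\ (forall B : set R, measurable B ->
         PE (ER `&` [set z | B (L z.1.1 z.1.2 z.2 n)])),
      (forall w y, L w y 0 n = 0),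
      (forall w y t, 0 <= t -> 0 <= L w y t n) &
      (forall w y, ndcadlag (fun t => L w y t n))].

Definition solves (X : Omega -> R -> 'I_N -> R)
    (Ls : 'I_M -> Omega -> Dpath -> R -> 'I_N -> R) (y0 : 'I_M -> R)
    (Y : Omega -> R -> 'I_M -> R) : Prop :=
  let L m n w t := Ls m w (toD (Y w)) t n in
  [/\ (forall w t m, 0 <= t -> 0 <= Y w t m),
      (forall w m, cadlag (fun t => Y w t m)),
      (forall m, adapted (fun w t => Y w t m)) &
  exists (H : Omega -> R -> R) (l : 'I_M -> 'I_N -> Omega -> R -> R),
  [/\ predictable H /\ (forall w, ndcadlag (H w)),
      (exists B, compensator (jumpsum X) B /\ pdominated (Gproc X B) H),
      (forall m n, is_dLdH (L m n) H (l m n)),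
      (forall m, {ae P, forall w, forall t, 0 <= t ->
         Y w t m = y0 m - \sum_n L m n w t
           + \sum_n fine (\int[pathmu (fun s => X w s n)]_(s in Ioc0 t)
                (l m n w s / \sum_k l k n w s)%:E)%E}) &
      (forall w m t, 0 <= t ->
         Y w t m = 0 \/ leftlim (fun u => Y w u m) t = 0 ->
         forall s, t <= s ->
           (forall n, L m n w s = leftlim (L m n w) t) /\ Y w s m = 0)]].

Definition feasible X Ls y0 : Prop :=
  [/\ (forall m, strategy (Ls m)), (forall m, 0 < y0 m),
      (exists Y, solves X Ls y0 Y) &
      (forall Y Y', solves X Ls y0 Y -> solves X Ls y0 Y' ->
         {ae P, forall w, forall t, 0 <= t -> Y w t = Y' w t})].

Definition relwealth (Y : Omega -> R -> 'I_M -> R) (m : 'I_M) w t : R :=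
  let s := \sum_i Y w t i in if s == 0 then 0 else Y w t m / s.

Definition submartingale (Z : Omega -> R -> \bar R) : Prop :=
  [/\ (forall t, 0 <= t -> forall B : set (\bar R), measurable B ->
         F t [set w | B (Z w t)]),
      (forall t, 0 <= t -> P.-integrable setT (fun w => Z w t)) &
      (forall s t, 0 <= s -> s <= t -> forall A, F s A ->
         (\int[P]_(w in A) Z w s <= \int[P]_(w in A) Z w t)%E)].

Definition relative_growth_optimal X (L : Omega -> Dpath -> R -> 'I_N -> R)
    (m : 'I_M) : Prop :=
  strategy L /\
  forall Ls y0, Ls m = L -> feasible X Ls y0 ->
  forall Y, solves X Ls y0 Y ->
    {ae P, forall w, forall t, 0 <= t -> 0 < Y w t m} /\
    submartingale (fun w t => lnE (relwealth Y m w t)).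

End Market.

(* Main.v *)
Require Import Defs.
From HB Require Import structures.
From mathcomp Require Import all_boot all_order all_algebra.
From mathcomp Require Import all_classical all_reals all_analysis measurable_realfun.
From mathcomp.algebra_tactics Require Import ring lra.
Import Order.TTheory GRing.Theory Num.Def Num.Theory.
Import numFieldTopology.Exports.
Local Open Scope classical_set_scope.
Local Open Scope ring_scope.

Lemma sigmaI (T : Type) (G : set (set T)) (A B : set T) :
  sigma_algebra setT G -> G A -> G B -> G (A `&` B).
Proof.
move=> [G0 GC GU] GA GB.
have -> : A `&` B = setT `\` (\bigcup_k bigcup2 (setT `\` A) (setT `\` B) k).
  rewrite bigcup2E; apply/seteqP; split=> x /=.
    by move=> [Ax Bx]; split=> //; case=> -[_]; apply.
  move=> [_ H]; split; apply: contrapT => H'; apply: H; by [left|right].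
apply: (GC); apply: (GU) => -[|[|k]] /=; [exact: GC|exact: GC|exact: G0].
Qed.

Section MaxIneq.
Context {R : realType} {d : measure_display} {Omega : measurableType d}.
Variable P : probability Omega R.
Variable F : R -> set (set Omega).
Variable S : Omega -> R -> \bar R.
Hypothesis Hsig : forall {t}, 0 <= t -> sigma_algebra setT (F t).
Hypothesis HFm : forall {t}, 0 <= t -> F t `<=` measurable.
Hypothesis Hmono : forall {s t}, 0 <= s -> s <= t -> F s `<=` F t.
Hypothesis Hmeas : forall {t}, 0 <= t -> forall B : set (\bar R), measurable B ->
  F t [set w | B (S w t)].
Hypothesis Hint : forall {t}, 0 <= t -> P.-integrable setT (fun w => S w t).
Hypothesis Hsub : forall {s t}, 0 <= s -> s <= t -> forall A, F s A ->
  (\int[P]_(w in A) S w s <= \int[P]_(w in A) S w t)%E.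
Hypothesis Hle0 : forall w t, 0 <= t -> (S w t <= 0)%E.
Variable lam : R.
Hypothesis lam0 : 0 < lam.

Definition Alow t := [set w | (S w t <= (- lam)%:E)%E].

Fixpoint Hit (n : nat) (tt : nat -> R) : set Omega :=
  match n with
  | 0 => Alow (tt 0%N)
  | n.+1 => Alow (tt 0%N) `|` Hit n (fun i => tt i.+1)
  end.

Lemma FAlow t : 0 <= t -> F t (Alow t).
Proof.
move=> t0; have := Hmeas t0 _ (emeasurable_itv `]-oo, (- lam)%:E]).
by congr (F t _); apply/seteqP; split=> w /=; rewrite in_itv /=.
Qed.

Lemma FAlowC t : 0 <= t -> F t (~` Alow t).
Proof.
move=> t0; have [_ GC _] := Hsig t0.
by rewrite -setTD; apply: GC; apply: FAlow.
Qed.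

Lemma Hit_mem n tt w : Hit n tt w <-> exists2 i, (i <= n)%N & Alow (tt i) w.
Proof.
elim: n tt => [|n IH] tt /=.
  by split=> [h|[i]]; [exists 0%N|rewrite leqn0 => /eqP ->].
split=> [[h|/IH [i ni h]]|[[|i]]]; first by exists 0%N.
  by exists i.+1.
  by move=> _ h; left.
by move=> ni h; right; apply/IH; exists i.
Qed.

Lemma intS_meas t (A : set Omega) : 0 <= t -> measurable A ->
  measurable_fun A (fun w => S w t).
Proof.
move=> t0 mA; apply: (measurable_funS measurableT) => //.
exact: measurable_int (Hint t0).
Qed.

Lemma int_le_cst t (A : set Omega) (c : R) : 0 <= t -> measurable A ->
  (forall w, A w -> (S w t <= c%:E)%E) ->
  (\int[P]_(w in A) S w t <= c%:E * P A)%E.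
Proof.
move=> t0 mA h.
rewrite -(integral_cst P mA).
apply: le_integral => //.
- exact: integrableS (Hint t0).
- exact: finite_measure_integrable_cst.
by move=> w /[!inE] /h.
Qed.

Lemma split_int t (C : set Omega) : 0 <= t -> measurable C ->
  (\int[P]_(w in C) S w t =
   \int[P]_(w in C `&` Alow t) S w t + \int[P]_(w in C `&` ~` Alow t) S w t)%E.
Proof.
move=> t0 mC.
have mA : measurable (Alow t) by exact: (HFm t0 _ (FAlow _ t0)).
have mAC : measurable (~` Alow t) by exact: measurableC.
rewrite -integral_setU //; first by rewrite -setIUr setUv setIT.
- exact: measurableI.
- exact: measurableI.
- by apply: intS_meas => //; apply: measurableU; exact: measurableI.
by apply/disj_setPS => w [[_ a] [_ na]].
Qed.

Lemma mHit n : forall u, (forall i, 0 <= u i) -> measurable (Hit n u).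
Proof.
elim: n => [|n IH] u u0 /=; first exact: (HFm (u0 0%N) _ (FAlow _ (u0 0%N))).
apply: measurableU; first exact: (HFm (u0 0%N) _ (FAlow _ (u0 0%N))).
exact: IH.
Qed.

Lemma maxineq n : forall (tt : nat -> R), 0 <= tt 0%N ->
  (forall i, tt i <= tt i.+1) ->
  forall C, F (tt 0%N) C ->
  (\int[P]_(w in C) S w (tt 0%N) <= (- lam)%:E * P (C `&` Hit n tt))%E.
Proof.
elim: n => [|n IH] tt t0 tmono C FC;
  have mC : measurable C by exact: (HFm t0 _ FC).
- have mA : measurable (Alow (tt 0%N)) by exact: (HFm t0 _ (FAlow _ t0)).
  have mAC : measurable (~` Alow (tt 0%N)) by exact: measurableC.
  rewrite split_int //= -[X in (_ <= X)%E]adde0; apply: leeD.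
    by apply: int_le_cst => //; [exact: measurableI|move=> w []].
  rewrite -(mul0e (P (C `&` ~` Alow (tt 0%N)))).
  apply: int_le_cst => //; first exact: measurableI.
  by move=> w _; apply: Hle0.
have t10 : 0 <= tt 1%N by apply: le_trans t0 (tmono 0%N).
have mA : measurable (Alow (tt 0%N)) by exact: (HFm t0 _ (FAlow _ t0)).
have mAC : measurable (~` Alow (tt 0%N)) by exact: measurableC.
have FC2' : F (tt 0%N) (C `&` ~` Alow (tt 0%N)).
  apply: sigmaI; first exact: Hsig.
    exact: FC.
  exact: FAlowC.
have FC2 : F (tt 1%N) (C `&` ~` Alow (tt 0%N)) by exact: (Hmono t0 (tmono 0%N) _ FC2').
have mC2 : measurable (C `&` ~` Alow (tt 0%N)) by exact: (HFm t10 _ FC2).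
have mH : measurable (Hit n (fun i => tt i.+1)).
  apply: mHit => i; apply: le_trans t0 _.
  elim: i => [|i IHi]; first exact: tmono.
  exact: le_trans IHi (tmono _).
rewrite split_int //=.
have -> : C `&` (Alow (tt 0%N) `|` Hit n (fun i => tt i.+1)) =
  (C `&` Alow (tt 0%N)) `|` ((C `&` ~` Alow (tt 0%N)) `&` Hit n (fun i => tt i.+1)).
  apply/seteqP; split=> w /=.
    move=> [Cw [Aw|Hw]]; first by left.
    by have [Aw|nAw] := pselect (Alow (tt 0%N) w); [left|right].
  by move=> [[Cw Aw]|[[Cw _] Hw]]; split=> //; [left|right].
rewrite measureU //; first last.
- by apply/seteqP; split=> w // [[_ Aw] [[_ nAw] _]].
- exact: measurableI.
- exact: measurableI.
rewrite muleDr //; last by rewrite ge0_adde_def // inE.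
apply: leeD.
  by apply: int_le_cst => //; [exact: measurableI|move=> w []].
apply: le_trans (Hsub t0 (tmono 0%N) _ FC2') _.
exact: (IH (fun i => tt i.+1)).
Qed.


Definition td (n i : nat) : R := i%:R / 2%:R ^+ n.

Lemma td_ge0 n i : 0 <= td n i.
Proof. by rewrite /td divr_ge0 // exprn_ge0. Qed.

Lemma td_mono n i : td n i <= td n i.+1.
Proof. by rewrite /td ler_pM2r ?invr_gt0 ?exprn_gt0 // ler_nat. Qed.

Lemma td_double n i : td n.+1 (2 * i) = td n i.
Proof.
rewrite /td exprS natrM; have h : (2%:R ^+ n : R) != 0 by rewrite expf_neq0 // pnatr_eq0.
by field; rewrite h.
Qed.

Definition Edy n := Hit (n * 2 ^ n) (td n).

Lemma Edy_mem n w : Edy n w <-> exists2 i, (i <= n * 2 ^ n)%N & Alow (td n i) w.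
Proof. exact: Hit_mem. Qed.

Lemma Edy_S n : Edy n `<=` Edy n.+1.
Proof.
move=> w /Edy_mem [i ni h]; apply/Edy_mem; exists (2 * i)%N; last by rewrite td_double.
rewrite expnS mulnCA; apply: leq_mul => //; apply: leq_trans ni _.
by rewrite leq_mul2r leqnSn orbT.
Qed.

Lemma Edy_homo : {homo Edy : n m / (n <= m)%N >-> (n <= m)%O}.
Proof.
move=> n m nm; apply/subsetPset; rewrite -(subnKC nm).
elim: (m - n)%N => [|k IH]; first by rewrite addn0.
by move=> w /IH; rewrite addnS; apply: Edy_S.
Qed.

Lemma mEdy n : measurable (Edy n).
Proof. by apply: mHit => i; exact: td_ge0. Qed.

Definition cst0 : R := - fine (\int[P]_(w in setT) S w 0)%E.

Lemma Edy_bound n : (P (Edy n) <= (cst0 / lam)%:E)%E.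
Proof.
have Ht0 : td n 0 = 0 by rewrite /td mul0r.
have FT : F (td n 0) setT.
  rewrite Ht0; case: (Hsig (lexx 0)) => G0 GC GU.
  by have := GC _ G0; rewrite setD0.
have := maxineq (n * 2 ^ n) (td n) (td_ge0 n 0) (td_mono n) setT FT.
rewrite Ht0 setTI.
have fi : (\int[P]_(w in setT) S w 0)%E \is a fin_num by exact: integrable_fin_num (Hint (lexx 0)).
have fp : P (Edy n) \is a fin_num by exact: fin_num_measure (mEdy n).
rewrite -(fineK fi) -(fineK fp) -EFinM lee_fin => h.
rewrite lee_fin ler_pdivlMr // /cst0; lra.
Qed.

Lemma Ucup_bound : (P (\bigcup_n Edy n) <= (cst0 / lam)%:E)%E.
Proof.
have mU : measurable (\bigcup_n Edy n) by apply: bigcupT_measurable => n; exact: mEdy.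
have h := nondecreasing_cvg_mu (mu:=P) mEdy mU Edy_homo.
rewrite -(cvg_lim _ h) //; apply: lime_le; first by apply/cvg_ex; eexists; exact: h.
by apply: nearW => n; exact: Edy_bound.
Qed.

End MaxIneq.

Lemma dyadic_near {R : realType} (t δ : R) : 0 <= t -> 0 < δ ->
  exists n i, (i <= n * 2 ^ n)%N /\ t < i%:R / 2%:R ^+ n /\ i%:R / 2%:R ^+ n < t + δ.
Proof.
move=> t0 d0.
set u := δ^-1.
have du : δ * u = 1 by rewrite /u mulfV // gt_eqF.
have u0 : 0 < u by rewrite /u invr_gt0.
set n := (truncn (t + 1 + u)).+1.
have hn : t + 1 + u < n%:R by exact: truncnS_gt.
set q : R := 2%:R ^+ n.
have hq : n%:R < q by rewrite /q -natrX ltr_nat ltn_expl.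
have q0 : 0 < q by rewrite /q exprn_gt0.
have tq0 : 0 <= t * q by rewrite mulr_ge0 // ltW.
set i := (truncn (t * q)).+1.
have hi1 : t * q < i%:R by exact: truncnS_gt.
have hi2 : i%:R <= t * q + 1 by rewrite /i -natr1 lerD2r truncn_le.
exists n, i; split; last split.
- rewrite -(ler_nat R) natrM natrX -/q.
  have h1 : (t + 1) * q <= n%:R * q by rewrite ler_pM2r //; lra.
  have h2 : 1 <= q by rewrite /q exprn_ege1 // ler1n.
  lra.
- by rewrite ltr_pdivlMr.
- rewrite ltr_pdivrMr //.
  have h1 : u * δ < n%:R * δ by rewrite ltr_pM2r //; lra.
  have h3 : n%:R * δ < q * δ by rewrite ltr_pM2r.
  rewrite -/q; lra.
Qed.

Lemma sum_ge_term {R : realType} {M : nat} (y : 'I_M -> R) (m : 'I_M) :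
  (forall i, 0 <= y i) -> y m <= \sum_i y i.
Proof.
move=> y0; rewrite (bigD1 m) //= lerDl; exact: sumr_ge0.
Qed.

Lemma relwealth_pos {R : realType} {d : measure_display} {Omega : measurableType d}
  {M : nat} (Y : Omega -> R -> 'I_M -> R) m w s :
  (forall i, 0 <= Y w s i) -> 0 < Y w s m ->
  relwealth Y m w s = Y w s m / \sum_i Y w s i /\ 0 < \sum_i Y w s i.
Proof.
move=> y0 ym; have hs : 0 < \sum_i Y w s i := lt_le_trans ym (sum_ge_term _ m y0).
by rewrite /relwealth gt_eqF.
Qed.

Lemma rc_find {R : realType} {d : measure_display} {Omega : measurableType d}
  {M : nat} (Y : Omega -> R -> 'I_M -> R) (m : 'I_M) w (t eps : R) :
  0 <= t -> (forall i, Y w s i @[s --> at_right t] --> Y w t i) ->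
  (forall s i, 0 <= s -> 0 <= Y w s i) -> (forall s, 0 <= s -> 0 < Y w s m) ->
  relwealth Y m w t < eps ->
  exists2 e, 0 < e & forall s, t < s < t + e -> relwealth Y m w s < eps.
Proof.
move=> t0 rc y0 ypos.
have [-> hs] := relwealth_pos Y m w t (y0 t ^~ t0) (ypos t t0).
rewrite ltr_pdivrMr // => hlt.
pose g s := eps * \sum_i Y w s i - Y w s m.
have gc : g s @[s --> at_right t] --> g t.
  apply: cvgB; last exact: rc.
  apply: cvgMl_tmp; apply: cvg_big => //; first exact: add_continuous.
have gt0 : 0 < g t by rewrite /g subr_gt0.
have := cvgr_gt (F := at_right t) (g t) gc 0 gt0.
move=> /(_ (at_right_proper_filter t)) h.
have : nbhs t (fun s => t < s -> 0 < g s) by exact: h.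
move=> /nbhs_ballP [e /= e0 He].
exists e => // s /andP [ts tse].
have s0 : 0 <= s by lra.
have [-> hs'] := relwealth_pos Y m w s (y0 s ^~ s0) (ypos s s0).
rewrite ltr_pdivrMr //; rewrite -subr_gt0; apply: He => //.
rewrite /ball /= ltr_distlC; apply/andP; split; lra.
Qed.

Lemma limsup_le_eps {R : realType} (f g : R -> \bar R) :
  (forall e : R, 0 < e -> exists T : R, forall t, T < t -> (f t <= g t + e%:E)%E) ->
  (limsup_at_infty f <= limsup_at_infty g)%E.
Proof.
move=> h; rewrite /limsup_at_infty /limf_esup.
apply: le_ereal_inf_tmp => _ [V FV <-].
apply/lee_addgt0Pr => e e0.
have [T HT] := h e e0.
have FV' : pinfty_nbhs R (V `&` [set t | T < t]).
  case: FV => M [Mr HM]; exists (Num.max M T); split; first exact: num_real.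
  by move=> x; rewrite gt_max => /andP [Mx Tx]; split; [exact: HM|].
apply: le_trans (ereal_inf_lbound _) _; first by exists (V `&` [set t | T < t]).
apply: ge_ereal_sup => _ [t [Vt Tt] <-].
apply: le_trans (HT t Tt) _; rewrite leeD2r //.
by apply: ereal_sup_ubound; exists t.
Qed.
Lemma growth_cmp {R : realType} {d : measure_display} {Omega : measurableType d}
  {M : nat} (Y : Omega -> R -> 'I_M -> R) (m k : 'I_M) w :
  (forall t i, 0 <= t -> 0 <= Y w t i) -> (forall t, 0 <= t -> 0 < Y w t m) ->
  (0 < ereal_inf [set (relwealth Y m w t)%:E | t in Rp])%E ->
  (limsup_at_infty (fun t : R => lnE (Y w t k) * (t^-1)%:E)
   <= limsup_at_infty (fun t : R => lnE (Y w t m) * (t^-1)%:E))%E.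
Proof.
move=> y0 ypos.
have r1 t : 0 <= t -> relwealth Y m w t <= 1.
  move=> t0; have [-> hs] := relwealth_pos Y m w t (y0 t ^~ t0) (ypos t t0).
  by rewrite ler_pdivrMr // mul1r; apply: sum_ge_term => i; exact: y0.
have Rp0 : Rp (0 : R) by rewrite /Rp /= in_itv /= lexx.
have I1 : (ereal_inf [set (relwealth Y m w t)%:E | t in Rp] <= 1%:E)%E.
  apply: le_trans (ereal_inf_lbound _) _; first by exists 0.
  by rewrite lee_fin r1.
move: I1; set I := ereal_inf _ => I1 I0.
have [rho Irho] : exists rho : R, I = rho%:E.
  by move: I0 I1; case: (I) => [r _ _|_ //|//]; exists r.
have rho0 : 0 < rho by rewrite -lte_fin -Irho.
have rhot t : 0 <= t -> rho <= relwealth Y m w t.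
  move=> t0; rewrite -lee_fin -Irho; apply: ereal_inf_lbound; exists t => //.
  by rewrite /Rp /= in_itv /= t0.
have rho1 : rho <= 1 by apply: le_trans (rhot 0 (lexx 0)) (r1 0 (lexx 0)).
have lnrho : ln rho <= 0 by exact: ln_le0.
apply: limsup_le_eps => e e0.
exists (Num.max 0 (- ln rho / e)) => t; rewrite gt_max => /andP [t0 tT].
have t0' : 0 <= t by exact: ltW.
have := rhot t t0'.
have [-> hs] := relwealth_pos Y m w t (y0 t ^~ t0') (ypos t t0').
rewrite ler_pdivlMr // => hrs.
have ut : 0 < t^-1 by rewrite invr_gt0.
have hm := ypos t t0'.
rewrite /lnE hm.
have [hk|hk] := ltP 0 (Y w t k); last first.
  by rewrite gt0_mulNye ?lte_fin // leNye.
rewrite -!EFinM -EFinD lee_fin.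
have hsum : Y w t k <= \sum_i Y w t i by apply: sum_ge_term => i; exact: y0.
have h1 : ln (Y w t k) <= ln (Y w t m / rho).
  rewrite ler_ln ?posrE ?divr_gt0 //.
  by apply: le_trans hsum _; rewrite ler_pdivlMr // mulrC.
rewrite lnM ?posrE ?invr_gt0 // lnV ?posrE // in h1.
have h2 : ln (Y w t k) * t^-1 <= (ln (Y w t m) - ln rho) * t^-1 by rewrite ler_pM2r.
have h3 : - ln rho < e * t by rewrite -ltr_pdivrMl // mulrC.
have h4 : - ln rho * t^-1 < e * t * t^-1 by rewrite ltr_pM2r.
rewrite -mulrA mulfV ?gt_eqF // mulr1 in h4.
lra.
Qed.

Lemma relwealth_le1 {R : realType} {d : measure_display} {Omega : measurableType d}
  {M : nat} (Y : Omega -> R -> 'I_M -> R) (m : 'I_M) w t :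
  (forall i, 0 <= Y w t i) -> relwealth Y m w t <= 1.
Proof.
move=> y0; rewrite /relwealth; case: ifP => [_|hs]; first exact: ler01.
have hs' : 0 < \sum_i Y w t i by rewrite lt_def hs sumr_ge0.
by rewrite ler_pdivrMr // mul1r; apply: sum_ge_term.
Qed.

Lemma bad_in_Edy {R : realType} {d : measure_display} {Omega : measurableType d}
  {M : nat} (Y : Omega -> R -> 'I_M -> R) (m : 'I_M) w (lam : R) :
  (forall t i, 0 <= t -> 0 <= Y w t i) -> (forall i, cadlag (fun t => Y w t i)) ->
  (forall t, 0 <= t -> 0 < Y w t m) ->
  ~ (0 < ereal_inf [set (relwealth Y m w t)%:E | t in Rp])%E -> 0 < lam ->
  exists n, Edy (fun w t => lnE (relwealth Y m w t)) lam n w.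
Proof.
move=> y0 ycad ypos ninf lam0.
set eps := expR (- lam).
have eps0 : 0 < eps by exact: expR_gt0.
have : (ereal_inf [set (relwealth Y m w t)%:E | t in Rp] < eps%:E)%E.
  by apply: le_lt_trans (_ : _ <= 0%E)%E _; [rewrite leNgt; exact/negP|rewrite lte_fin].
move=> /ereal_inf_lt [_ [t Rpt <-]]; rewrite lte_fin => rlt.
have t0 : 0 <= t by move: Rpt; rewrite /Rp /= in_itv /= andbT.
have [e e0 He] := rc_find Y m w t eps t0 (fun i => (ycad i).1 t t0) (fun s i s0 => y0 s i s0) ypos rlt.
have [n [i [ni [ti tie]]]] := dyadic_near t e t0 e0.
exists n; apply/Edy_mem; exists i => //.
have hs : relwealth Y m w (td n i) < eps by apply: He; rewrite /td ti tie.
rewrite /Alow /=.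
have s0 : 0 <= (td n i : R) by exact: td_ge0.
have [hr hsum] := relwealth_pos Y m w (td n i) (y0 (td n i) ^~ s0) (ypos _ s0).
have rpos : 0 < relwealth Y m w (td n i) by rewrite hr divr_gt0 // ypos.
rewrite /lnE rpos lee_fin; apply: ltW.
by rewrite -(expRK (- lam)) -/eps ltr_ln ?posrE.
Qed.

Theorem mainTheorem9 (R : realType) (d : measure_display)
  (Omega : measurableType d) (P : probability Omega R)
  (F : R -> set (set Omega)) (M N : nat)
  (X : Omega -> R -> 'I_N -> R)
  (L : Omega -> Dpath M -> R -> 'I_N -> R) (m : 'I_M) :
  (2 <= M)%N -> (1 <= N)%N ->
  usual_filtration P F -> payoff F X ->
  relative_growth_optimal P F X L m ->
  forall (Ls : 'I_M -> Omega -> Dpath M -> R -> 'I_N -> R) (y0 : 'I_M -> R),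
  Ls m = L -> (forall i, 0 < y0 i) -> feasible P F X Ls y0 ->
  forall Y : Omega -> R -> 'I_M -> R, solves P F X Ls y0 Y ->
  {ae P, forall w, (0 < ereal_inf [set (relwealth Y m w t)%:E | t in Rp])%E} /\
  (forall k : 'I_M, {ae P, forall w,
     (limsup_at_infty (fun t : R => lnE (Y w t k) * (t^-1)%:E)
      <= limsup_at_infty (fun t : R => lnE (Y w t m) * (t^-1)%:E))%E}).
Proof.
move=> _ _ [Hsig HFm Hmono _ _] _ [_ Hrgo] Ls y0 HLs _ Hfeas Y Hsol.
have [Hpos Hsm] := Hrgo Ls y0 HLs Hfeas Y Hsol.
move: Hsol; rewrite /solves => -[Ynn Ycad _ _].
pose S := fun w t => lnE (relwealth Y m w t).
case: Hsm => Smeas Sint Ssub.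
have Sle0 : forall w t, 0 <= t -> (S w t <= 0)%E.
  move=> w t t0; rewrite /S /lnE; case: ifP => _; last exact: leNye.
  by rewrite lee_fin; apply: ln_le0; apply: relwealth_le1 => i; exact: Ynn.
pose lamj (j : nat) : R := j.+1%:R.
have lamj0 j : 0 < lamj j by rewrite /lamj ltr0Sn.
pose N0 := \bigcap_j \bigcup_n Edy S (lamj j) n.
have mU j : measurable (\bigcup_n Edy S (lamj j) n).
  by apply: bigcupT_measurable => n; exact: (mEdy F S HFm Smeas).
have mN0 : measurable N0 by apply: bigcapT_measurable => j; exact: mU.
have PN0 : P N0 = 0%E.
  have fp : P N0 \is a fin_num by exact: fin_num_measure.
  have p0 : (0 <= fine (P N0)) by rewrite fine_ge0 // measure_ge0.
  have hp j : fine (P N0) <= cst0 P S / lamj j.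
    rewrite -lee_fin fineK //.
    apply: le_trans (Ucup_bound P F S Hsig HFm Hmono Smeas Sint Ssub Sle0 _ (lamj0 j)).
    rewrite le_measure // ?inE //.
    by move=> w /(_ j I).
  apply/eqP; rewrite -(fineK fp) eqe; apply/eqP.
  apply: le_anti; rewrite p0 andbT; rewrite leNgt; apply/negP => pp.
  set c := cst0 P S in hp.
  have := hp (truncn (c / fine (P N0))).
  have := truncnS_gt (c / fine (P N0)).
  rewrite /lamj ltr_pdivrMr // => h1.
  rewrite ler_pdivlMr ?ltr0Sn //; lra.
case: Hpos => Nb [mNb PNb sNb].
have key w : ~ (Nb `|` N0) w ->
  (forall t, 0 <= t -> 0 < Y w t m) /\
  (0 < ereal_inf [set (relwealth Y m w t)%:E | t in Rp])%E.
  move=> hw.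
  have good : forall t, 0 <= t -> 0 < Y w t m.
    by apply: contrapT => h; apply: hw; left; exact: sNb.
  split=> //; apply: contrapT => ninf; apply: hw; right => j _.
  have [n hn] := bad_in_Edy Y m w (lamj j) (fun t i t0 => Ynn w t i t0) (Ycad w) good ninf (lamj0 j).
  by exists n.
have mA : measurable (Nb `|` N0) by exact: measurableU.
have PA : P (Nb `|` N0) = 0%E.
  apply: le_anti; rewrite measure_ge0 andbT.
  apply: le_trans (measureU2 P mNb mN0) _.
  suff -> : (P Nb + P N0 = 0)%E by [].
  by rewrite PN0 adde0; exact: PNb.
split.
  exists (Nb `|` N0); split => // w /= hw; apply: contrapT => hw'; apply: hw.
  by have [] := key w hw'.
move=> k; exists (Nb `|` N0); split => // w /= hw; apply: contrapT => hw'; apply: hw.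
have [good inf0] := key w hw'.
exact: (growth_cmp Y m k w (fun t i t0 => Ynn w t i t0) good inf0).
Qed.
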